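(* Let $M$ be a graded $R$-module. The following are equivalent: (1) $qp.Spec_g(M)$ with the quasi-Zariski topology is a $T_0$-space. (2) For all $Q,P\in qp.Spec_g(M)$, if $qp\text{-}V_M^g(Q)=qp\text{-}V_M^g(P)$ then $Q=P$. (3) $|qp.Spec_g^p(M)|\le 1$ for every $p\in Spec_g(R)$. (4) The natural map $\varphi$ is injective.
   Context: $R=\bigoplus_{g\in G}R_g$ is a graded commutative ring with identity graded by a group $G$, $h(R)=\bigcup_g R_g$; $M$ is a graded $R$-module, $h(M)$ its homogeneous elements. $Gr(I)$ is the graded radical of a graded ideal $I$. $Spec_g(R)$: graded prime ideals. $(K:_RM)=\{r: rM\subseteq K\}$. Graded prime submodule: proper graded $P$ with $rm\in P$ ($r\in h(R), m\in h(M)$) implying $m\in P$ or $r\in(P:_RM)$. $Gr_M(K)$: intersection of graded prime submodules containing $K$ ($M$ if none). Graded primeful property of $K$: for each graded prime $p\supseteq(K:_RM)$ there is a graded prime submodule $P\supseteq K$ with $(P:_RM)=p$. Graded quasi-primary submodule: proper graded $Q$ with $rm\in Q$ ($r\in h(R),m\in h(M)$) implying $r\in Gr((Q:_RM))$ or $m\in Gr_M(Q)$. $qp.Spec_g(M)$: graded quasi-primary submodules with the graded primeful property; $qp.Spec_g^p(M)=\{Q\in qp.Spec_g(M): Gr((Q:_RM))=p\}$. $qp\text{-}V_M^g(K)=\{Q\in qp.Spec_g(M): Gr((Q:_RM))\supseteq Gr((K:_RM))\}$; the quasi-Zariski topology has closed sets exactly these. $\overline R=R/\mathrm{Ann}(M)$.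 For $Q\in qp.Spec_g(M)$, $(Gr_M(Q):_RM)=Gr((Q:_RM))$ is a graded prime ideal of $R$ containing $\mathrm{Ann}(M)$; the natural map $\varphi:qp.Spec_g(M)\to Spec_g(\overline R)$ is $\varphi(Q)=(Gr_M(Q):_RM)/\mathrm{Ann}(M)$. *)

(* Defs.v *)
From HB Require Import structures.
From mathcomp Require Import all_boot all_order all_algebra.
Set Implicit Arguments.
Unset Strict Implicit.
Unset Printing Implicit Defensive.
Import GRing.Theory.
Local Open Scope ring_scope.

(* Graded rings / graded modules over a group G (a groupType: any group,
   possibly infinite and non-abelian).  Submodules, ideals and subsets are
   represented as Prop-valued predicates. *)

Section Graded.
Variables (G : groupType) (R : comPzRingType) (M : lmodType R).
(* RG g = the homogeneous component R_g, MG g = M_g *)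
Variables (RG : G -> R -> Prop) (MG : G -> M -> Prop).

Definition graded_ring : Prop :=
  [/\ (forall g, RG g 0 /\ (forall x y, RG g x -> RG g y -> RG g (x - y))),
      (forall g h x y, RG g x -> RG h y -> RG (g * h)%g (x * y)),
      (forall r : R, exists (s : seq G) (f : G -> R),
          [/\ uniq s, forall g, RG g (f g) & r = \sum_(g <- s) f g]) &
      (forall (s : seq G) (f : G -> R), uniq s -> (forall g, RG g (f g)) ->
          \sum_(g <- s) f g = 0 -> forall g, g \in s -> f g = 0)].

Definition graded_module : Prop :=
  [/\ (forall g, MG g 0 /\ (forall x y, MG g x -> MG g y -> MG g (x - y))),
      (forall g h (r : R) (m : M), RG g r -> MG h m -> MG (g * h)%g (r *: m)),
      (forall m : M, exists (s : seq G) (f : G -> M),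
          [/\ uniq s, forall g, MG g (f g) & m = \sum_(g <- s) f g]) &
      (forall (s : seq G) (f : G -> M), uniq s -> (forall g, MG g (f g)) ->
          \sum_(g <- s) f g = 0 -> forall g, g \in s -> f g = 0)].

Definition homR (r : R) : Prop := exists g, RG g r.
Definition homM (m : M) : Prop := exists g, MG g m.

Definition subset_of {T : Type} (A B : T -> Prop) : Prop := forall x, A x -> B x.

Definition ideal (I : R -> Prop) : Prop :=
  [/\ I 0, (forall x y, I x -> I y -> I (x + y)) & (forall r x, I x -> I (r * x))].
Definition submodule (N : M -> Prop) : Prop :=
  [/\ N 0, (forall x y, N x -> N y -> N (x + y)) & (forall (r : R) x, N x -> N (r *: x))].

Definition graded_ideal (I : R -> Prop) : Prop :=
  ideal I /\ forall r, I r -> exists s : seq R,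
    (forall x, x \in s -> homR x /\ I x) /\ r = \sum_(x <- s) x.
Definition graded_submodule (N : M -> Prop) : Prop :=
  submodule N /\ forall n, N n -> exists s : seq M,
    (forall x, x \in s -> homM x /\ N x) /\ n = \sum_(x <- s) x.

Definition colon (K : M -> Prop) : R -> Prop := fun r => forall m : M, K (r *: m).
Definition Ann : R -> Prop := colon (fun m => m = 0).

Definition graded_prime_ideal (p : R -> Prop) : Prop :=
  [/\ graded_ideal p, ~ (forall r, p r) &
      forall a b, homR a -> homR b -> p (a * b) -> p a \/ p b].

Definition Gr (I : R -> Prop) : R -> Prop := fun r =>
  exists (s : seq G) (f : G -> R),
    [/\ uniq s, (forall g, RG g (f g)), r = \sum_(g <- s) f g &
        forall g, g \in s -> exists n : nat, (0 < n)%N /\ I (f g ^+ n)].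

Definition graded_prime_submodule (P : M -> Prop) : Prop :=
  [/\ graded_submodule P, ~ (forall m, P m) &
      forall r m, homR r -> homM m -> P (r *: m) -> P m \/ colon P r].

Definition GrM (K : M -> Prop) : M -> Prop := fun m =>
  forall P, graded_prime_submodule P -> subset_of K P -> P m.

Definition primeful (K : M -> Prop) : Prop :=
  forall p, graded_prime_ideal p -> subset_of (colon K) p ->
    exists P, [/\ graded_prime_submodule P, subset_of K P & colon P = p].

Definition quasi_primary (Q : M -> Prop) : Prop :=
  [/\ graded_submodule Q, ~ (forall m, Q m) &
      forall r m, homR r -> homM m -> Q (r *: m) -> Gr (colon Q) r \/ GrM Q m].

Definition qpSpec (Q : M -> Prop) : Prop := quasi_primary Q /\ primeful Q.

Definition qpSpec_p (p : R -> Prop) (Q : M -> Prop) : Prop :=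
  qpSpec Q /\ Gr (colon Q) = p.

Definition qpV (K : M -> Prop) : (M -> Prop) -> Prop := fun Q =>
  qpSpec Q /\ subset_of (Gr (colon K)) (Gr (colon Q)).

Definition qz_open (U : (M -> Prop) -> Prop) : Prop :=
  exists K, graded_submodule K /\ U = (fun Q => qpSpec Q /\ ~ qpV K Q).

Definition qz_T0 : Prop :=
  forall Q P, qpSpec Q -> qpSpec P -> Q <> P ->
    exists U, qz_open U /\ ((U Q /\ ~ U P) \/ (U P /\ ~ U Q)).

(* natural map phi : qp.Spec_g(M) -> Spec_g(R / Ann(M)),
   Q |-> (Gr_M(Q) :_R M) / Ann(M), where R/Ann(M) is presented by a
   surjective ring morphism pi with kernel Ann(M). *)
Definition phi (Rbar : comPzRingType) (pi : R -> Rbar) (Q : M -> Prop) : Rbar -> Prop :=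
  fun y => exists r, colon (GrM Q) r /\ pi r = y.

End Graded.

(* Main.v *)
Require Import Defs.
From HB Require Import structures.
From mathcomp Require Import all_boot all_order all_algebra.
From mathcomp Require Import zify.
Import GRing.Theory.
Local Open Scope ring_scope.
Set Implicit Arguments.
Unset Strict Implicit.

Lemma big_closed (V : zmodType) (P : V -> Prop) (T : eqType) (s : seq T) (F : T -> V) :
  P 0 -> (forall x y, P x -> P y -> P (x + y)) ->
  (forall i, i \in s -> P (F i)) -> P (\sum_(i <- s) F i).
Proof.
move=> P0 PD; elim: s => [|a s IH] Hs; first by rewrite big_nil.
rewrite big_cons; apply: PD; first by apply: (Hs); rewrite inE eqxx.
by apply: IH => i Hi; apply: (Hs); rewrite inE Hi orbT.
Qed.

Lemma nil_add (R : comPzRingType) (I : R -> Prop) x y m n :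
  ideal I -> I (x ^+ m) -> I (y ^+ n) -> I ((x + y) ^+ (m + n)).
Proof.
case=> I0 ID IM Hx Hy; rewrite exprDn.
apply: big_closed => // i _.
rewrite -mulr_natl; apply: (IM).
case: (leqP n i) => Hi.
  have -> : (i : nat) = (i - n + n)%N by lia.
  by rewrite [y ^+ _]exprD mulrA; apply: (IM).
have -> : (m + n - i = (n - i) + m)%N by lia.
by rewrite exprD mulrAC; apply: (IM).
Qed.

Lemma nil_sum (R : comPzRingType) (I : R -> Prop) (T : eqType) (s : seq T) (f : T -> R) :
  ideal I -> (forall g, g \in s -> exists n, I (f g ^+ n)) ->
  exists n, I ((\sum_(g <- s) f g) ^+ n).
Proof.
move=> HI; elim: s => [|a s IH] Hs.
  by exists 1%N; rewrite big_nil expr1; case: HI.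
have [n Hn] : exists n, I ((\sum_(g <- s) f g) ^+ n).
  by apply: IH => g Hg; apply: (Hs); rewrite inE Hg orbT.
have [m Hm] := Hs a (mem_head _ _).
by exists (m + n)%N; rewrite big_cons; apply: nil_add.
Qed.

Section Gr.
Variables (G : groupType) (R : comPzRingType) (M : lmodType R).
Variables (RG : G -> R -> Prop) (MG : G -> M -> Prop).
Hypothesis HR : graded_ring RG.
Hypothesis HM : graded_module RG MG.

Lemma RG0 g : RG g 0. Proof. by case: HR => H _ _ _; case: (H g). Qed.
Lemma RGB g x y : RG g x -> RG g y -> RG g (x - y).
Proof. by case: HR => H _ _ _; case: (H g) => _; apply. Qed.
Lemma RGD g x y : RG g x -> RG g y -> RG g (x + y).
Proof. by move=> Hx Hy; rewrite -[y]opprK; apply: RGB => //; rewrite -sub0r; apply: RGB => //; apply: RG0. Qed.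
Lemma MG0 g : MG g 0. Proof. by case: HM => H _ _ _; case: (H g). Qed.
Lemma MGB g x y : MG g x -> MG g y -> MG g (x - y).
Proof. by case: HM => H _ _ _; case: (H g) => _; apply. Qed.
Lemma MGD g x y : MG g x -> MG g y -> MG g (x + y).
Proof. by move=> Hx Hy; rewrite -[y]opprK; apply: MGB => //; rewrite -sub0r; apply: MGB => //; apply: MG0. Qed.

Lemma homRM a b : homR RG a -> homR RG b -> homR RG (a * b).
Proof. by case: HR => _ H _ _ [g Ha] [h Hb]; exists (g * h)%g; apply: H. Qed.
Lemma homRX a n : homR RG a -> homR RG (a ^+ n.+1).
Proof. by move=> Ha; elim: n => [|n IH]; [rewrite expr1 | rewrite exprS; apply: homRM]. Qed.
Lemma homMZ a m : homR RG a -> homM MG m -> homM MG (a *: m).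
Proof. by case: HM => _ H _ _ [g Ha] [h Hb]; exists (g * h)%g; apply: H. Qed.

Lemma sub_sum (N : M -> Prop) (T : eqType) (s : seq T) F :
  submodule N -> (forall i, i \in s -> N (F i)) -> N (\sum_(i <- s) F i).
Proof. by case=> N0 ND _; apply: big_closed. Qed.

Lemma sumhom (N : M -> Prop) x : submodule N ->
  (forall m, homM MG m -> N (x *: m)) -> forall m, N (x *: m).
Proof.
move=> HN H m; case: HM => _ _ Hd _; have [s [f [Hu Hf ->]]] := Hd m.
rewrite scaler_sumr; apply: sub_sum => // g _; apply: H; exists g; exact: Hf.
Qed.

Lemma colon_ideal (N : M -> Prop) : submodule N -> ideal (colon N).
Proof.
case=> N0 ND NZ; split.
- by move=> m; rewrite scale0r.
- by move=> x y Hx Hy m; rewrite scalerDl; apply: ND.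
- by move=> r x Hx m; rewrite -scalerA; apply: NZ.
Qed.

Lemma Gr_pow (I : R -> Prop) r : ideal I -> Gr RG I r -> exists n, I (r ^+ n).
Proof.
move=> HI [s [f [_ _ -> Hs]]]; apply: nil_sum => // g /Hs [n [_ Hn]]; by exists n.
Qed.

Lemma Gr_hom (I : R -> Prop) g a n : RG g a -> I (a ^+ n) -> (0 < n)%N -> Gr RG I a.
Proof.
move=> Ha Hn Hn0; exists [:: g], (fun h => if h == g then a else 0); split => //.
- by move=> h; case: eqP => [->|_] //; apply: RG0.
- by rewrite big_cons big_nil eqxx addr0.
- by move=> h; rewrite inE => /eqP ->; rewrite eqxx; exists n.
Qed.


Lemma comp_in_N (N : M -> Prop) : graded_submodule MG N ->
  forall u : seq M, (forall x, x \in u -> homM MG x /\ N x) ->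
  forall (v : seq G) (c : G -> M), uniq v -> (forall k, MG k (c k)) ->
  \sum_(x <- u) x = \sum_(k <- v) c k -> forall k, k \in v -> N (c k).
Proof.
move=> [[N0 ND NZ] _]; elim=> [|x u IH] Hu v c Hv Hc.
  rewrite big_nil => /esym H k Hk; case: HM => _ _ _ Hun.
  by rewrite (Hun v c Hv Hc H k Hk).
have [[d Hxd] Nx] := Hu x (mem_head _ _).
have Hu' : forall y, y \in u -> homM MG y /\ N y.
  by move=> y Hy; apply: Hu; rewrite inE Hy orbT.
have NB : forall a b, N a -> N b -> N (a - b).
  by move=> a b Ha Hb; apply: ND => //; rewrite -scaleN1r; apply: NZ.
rewrite big_cons => Hsum.
case Hdv: (d \in v).
  pose c2 k := if k == d then c k - x else c k.
  have Hc2 : forall k, MG k (c2 k).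
    by move=> k; rewrite /c2; case: eqP => [->|_] //; apply: MGB.
  have Hs2 : \sum_(y <- u) y = \sum_(k <- v) c2 k.
    rewrite (bigD1_seq d) //= /c2 eqxx.
    rewrite (eq_bigr c); last by move=> k /negPf ->.
    move: Hsum; rewrite (bigD1_seq d) //= => Hs'.
    apply: (addrI x); rewrite Hs' addrA [x + _]addrC subrK.
    by apply: congr2 => //; apply: eq_bigr => k /negPf ->.
  have IH2 := IH Hu' v c2 Hv Hc2 Hs2.
  move=> k Hk; have := IH2 k Hk; rewrite /c2; case: eqP => [->|_] //.
  by move=> H; rewrite -(subrK x (c d)); apply: ND.
pose c2 k := if k == d then - x else c k.
have Hc2 : forall k, MG k (c2 k).
  by move=> k; rewrite /c2; case: eqP => [->|_] //; rewrite -sub0r; apply: MGB => //; apply: MG0.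
have Hv2 : uniq (d :: v) by rewrite /= Hdv.
have Hs2 : \sum_(y <- u) y = \sum_(k <- d :: v) c2 k.
  rewrite big_cons /c2 eqxx (eq_big_seq c); last first.
    by move=> k Hk; case: eqP => // Ekd; move: Hk; rewrite Ekd Hdv.
  by rewrite -Hsum addKr.
have IH2 := IH Hu' (d :: v) c2 Hv2 Hc2 Hs2.
move=> k Hk; have := IH2 k; rewrite inE Hk orbT /c2 => /(_ isT).
by case: eqP => // Ekd; move: Hk; rewrite Ekd Hdv.
Qed.

Lemma colon_comp (N : M -> Prop) r (s : seq G) (f : G -> R) :
  graded_submodule MG N -> colon N r -> uniq s -> (forall g, RG g (f g)) ->
  r = \sum_(g <- s) f g -> forall g, g \in s -> colon N (f g).
Proof.
move=> HN Hr Hs Hf Er g0 Hg0.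
have HN' := HN; case: HN' => HNs HNg.
apply: (sumhom HNs) => m [h Hm].
have [u [Hu Eu]] := HNg _ (Hr m).
pose c k := f (k * h^-1)%g *: m.
have Hc : forall k, MG k (c k).
  move=> k; rewrite /c; case: HM => _ Hmul _ _.
  by have := Hmul _ _ _ _ (Hf (k * h^-1)%g) Hm; rewrite mulgVK.
have Hv : uniq [seq (g * h)%g | g <- s].
  by rewrite map_inj_uniq // => a b; apply: (can_inj (mulgK h)).
have Hsum : \sum_(x <- u) x = \sum_(k <- [seq (g * h)%g | g <- s]) c k.
  rewrite -Eu Er scaler_suml big_map /c; apply: eq_bigr => g _.
  by rewrite mulgK.
have := comp_in_N HN Hu Hv Hc Hsum (map_f _ Hg0).
by rewrite /c mulgK.
Qed.

End Gr.

From mathcomp Require classical_sets.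
From Stdlib Require Import Classical FunctionalExtensionality PropExtensionality.

Section Avoid.
Variables (G : groupType) (R : comPzRingType).
Variables (RG : G -> R -> Prop).
Hypothesis HR : graded_ring RG.

Definition Pgood (I : R -> Prop) (b : R) (J : R -> Prop) :=
  [/\ graded_ideal RG J, subset_of I J & forall k : nat, ~ J (b ^+ k)].

Lemma avoid (I : R -> Prop) b : graded_ideal RG I -> homR RG b ->
  (forall k, ~ I (b ^+ k)) ->
  exists p, [/\ graded_prime_ideal RG p, subset_of I p & ~ p b].
Proof.
move=> HI Hb Hav.
pose P' (J : R -> Prop) := J = (fun _ => False) \/ (Pgood I b) J.
have HI0 : I 0 by case: HI => [[]].
have PgI : (Pgood I b) I by split.
have PgX : forall X t, P' X -> X t -> (Pgood I b) X.
  by move=> X t [-> //|//].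
have [A [PA Amax]] : exists A, P' A /\ forall B, classical_sets.proper A B -> ~ P' B.
  apply: classical_sets.Zorn_bigcup => F HF Htot.
  case: (classic (exists t, classical_sets.bigcup F id t)) => [[t0 [X0 FX0 Xt0]]|Hne]; last first.
    left; apply: functional_extensionality => t; apply: propositional_extensionality.
    by split=> // Ht; apply: Hne; exists t.
  right.
  have PX0 : (Pgood I b) X0 by apply: (PgX X0 t0) => //; apply: HF.
  have HU : forall x, classical_sets.bigcup F id x -> exists X, [/\ F X, X x & (Pgood I b) X].
    move=> x [X FX Xx]; exists X; split; [exact: FX|exact: Xx|]; apply: (PgX X x) => //; apply: HF; exact: FX.
  rewrite /Pgood /graded_ideal /ideal; split.
  - split; [split|].
    + by exists X0 => //; case: PX0 => _ HIX _; apply: HIX.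
    + move=> x y /HU [X [FX Xx PX]] /HU [Y [FY Yy PY]].
      case: (Htot X Y FX FY) => [XY|YX].
        exists Y => //; case: PY => [[[_ YD _] _] _ _]; apply: YD => //; exact: XY.
      exists X => //; case: PX => [[[_ XD _] _] _ _]; apply: XD => //; exact: YX.
    + move=> r x /HU [X [FX Xx PX]]; exists X => //.
      by case: PX => [[[_ _ XM] _] _ _]; apply: XM.
    + move=> r /HU [X [FX Xx PX]]; case: PX => [[_ Xg] _ _].
      have [s [Hs Es]] := Xg r Xx; exists s; split => // x Hx.
      have [Hx1 Hx2] := Hs x Hx; split => //; by exists X.
  - move=> x Ix; exists X0 => //; by case: PX0 => _ HIX _; apply: HIX.
  - move=> k /HU [X [_ Xk PX]]; case: PX => _ _ HX; exact: HX k Xk.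
have PgA : (Pgood I b) A.
  case: PA => // EA; exfalso; apply: (Amax I); last by right.
  rewrite EA; split => // H; exact: H 0 HI0.
have Amax' : forall B, (Pgood I b) B -> subset_of A B -> subset_of B A.
  move=> B PB AB; apply: NNPP => nBA; apply: (Amax B); last by right.
  by split => // H; apply: nBA => x /H.
case: PgA => [[[A0 AD AM] Ag] IA Aav].
exists A; split => //; last by move=> Ab; apply: (Aav 1%N); rewrite expr1.
rewrite /graded_prime_ideal; split => //.
  by move=> H; apply: (Aav 0%N); apply: H.
move=> a c Ha Hc Hac; apply: NNPP => Hn.
have [nAa nAc] : ~ A a /\ ~ A c by split => H; apply: Hn; [left|right].
pose J (a : R) x := exists y r, A y /\ x = y + r * a.
have AJ : forall a, subset_of A (J a) by move=> a' x Ax; exists x, 0; rewrite mul0r addr0.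
have gJ : forall a, homR RG a -> graded_ideal RG (J a).
  move=> a' Ha'; split; first split.
  - by exists 0, 0; rewrite mul0r addr0.
  - move=> x y [y1 [r1 [A1 ->]]] [y2 [r2 [A2 ->]]]; exists (y1 + y2), (r1 + r2).
    split; first by apply: (AD).
    by rewrite mulrDl addrACA.
  - move=> t x [y1 [r1 [A1 ->]]]; exists (t * y1), (t * r1); split; first by apply: (AM).
    by rewrite mulrDr mulrA.
  - move=> x [y [r [Ay ->]]].
    have [u [Hu Eu]] := Ag y Ay.
    case: HR => _ _ Hd _; have [s [f [_ Hf Er]]] := Hd r.
    exists (u ++ [seq f g * a' | g <- s]); split.
      move=> z; rewrite mem_cat => /orP [/Hu [hz Az]|/mapP [g _ ->]].
        by split => //; apply: AJ.
      split; first by apply: homRM => //; exists g.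
      by exists 0, (f g); rewrite add0r.
    by rewrite big_cat /= big_map Eu Er mulr_suml.
have Jk : forall a, homR RG a -> ~ A a -> exists k, J a (b ^+ k).
  move=> a' Ha' nAa'; apply: NNPP => H.
  have PJ : (Pgood I b) (J a').
    split; [exact: gJ | by move=> x /IA /AJ | by move=> k Hk; apply: H; exists k].
  by apply: nAa'; apply: (Amax' _ PJ (AJ a')); exists 0, 1; rewrite add0r mul1r.
have [k [y1 [r1 [A1 E1]]]] := Jk a Ha nAa.
have [l [y2 [r2 [A2 E2]]]] := Jk c Hc nAc.
apply: (Aav (k + l)%N); rewrite exprD E1 E2.
rewrite mulrDl !mulrDr; apply: (AD); first apply: (AD).
- by apply: (AM).
- by rewrite [y1 * _]mulrC; apply: (AM).
apply: (AD); first by apply: (AM).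
have -> : r1 * a * (r2 * c) = (r1 * r2) * (a * c) by rewrite mulrACA.
by apply: (AM).
Qed.

End Avoid.

Section Main.
Variables (G : groupType) (R : comPzRingType) (M : lmodType R).
Variables (RG : G -> R -> Prop) (MG : G -> M -> Prop).
Hypothesis HR : graded_ring RG.
Hypothesis HM : graded_module RG MG.

Lemma prime_sub P : graded_prime_submodule RG MG P -> submodule P.
Proof. by case=> [[]]. Qed.

Lemma GrM_sub Q : submodule (GrM RG MG Q).
Proof.
split.
- by move=> P /prime_sub [].
- by move=> x y Hx Hy P HP HQ; case: (prime_sub HP) => _ D _; apply: D; [apply: Hx|apply: Hy].
- by move=> r x Hx P HP HQ; case: (prime_sub HP) => _ _ Z; apply: Z; apply: Hx.
Qed.

Lemma colon_graded N : graded_submodule MG N -> graded_ideal RG (colon N).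
Proof.
move=> HN; split; first by apply: colon_ideal; case: HN.
move=> r Hr; case: HR => _ _ Hd _; have [s [f [Hu Hf Er]]] := Hd r.
exists [seq f g | g <- s]; split; last by rewrite big_map.
move=> x /mapP [g Hg ->]; split; first by exists g.
exact: (colon_comp HM HN Hr Hu Hf Er Hg).
Qed.

Lemma proper1 (Q : M -> Prop) : ~ (forall m, Q m) -> ~ colon Q 1.
Proof. by move=> HQ H; apply: HQ => m; have := H m; rewrite scale1r. Qed.

Lemma B_sub_A Q : qpSpec RG MG Q -> forall r, colon (GrM RG MG Q) r -> Gr RG (colon Q) r.
Proof.
move=> [[HQg HQp _] HQf] r Hr.
case: HR => _ _ Hd _; have [s [f [Hu Hf Er]]] := Hd r.
exists s, f; split => // g Hg; apply: NNPP => Hn.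
have Hav : forall k, ~ colon Q (f g ^+ k).
  case=> [|k]; first by rewrite expr0; apply: proper1.
  by move=> H; apply: Hn; exists k.+1.
have [p [Hp Hsub Hnp]] := avoid HR (colon_graded HQg) (ex_intro _ g (Hf g)) Hav.
have [P [HP QP Ep]] := HQf p Hp Hsub.
apply: Hnp; rewrite -Ep.
have HPg : graded_submodule MG P by case: HP.
apply: (colon_comp HM HPg _ Hu Hf Er) => // m.
by apply: (Hr m).
Qed.

Lemma pow_colon P a n : graded_prime_submodule RG MG P -> homR RG a ->
  colon P (a ^+ n.+1) -> colon P a.
Proof.
move=> HP Ha; elim: n => [|n IH]; first by rewrite expr1.
move=> H; case: (classic (colon P a)) => // nPa; apply: IH.
apply: (sumhom HM (prime_sub HP)) => m Hm.
case: HP => _ _ Hpr.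
case: (Hpr a (a ^+ n.+1 *: m) Ha (homMZ HM (homRX HR n Ha) Hm)) => //.
by rewrite scalerA -exprS; apply: H.
Qed.

Lemma A_sub_B Q r : Gr RG (colon Q) r -> colon (GrM RG MG Q) r.
Proof.
move=> [s [f [Hu Hf Er Hp]]] m P HP QP.
rewrite Er scaler_suml; apply: (sub_sum (prime_sub HP)) => g Hg.
have [[|n] [Hn HQ]] := Hp g Hg => //.
apply: (pow_colon (n := n) HP (ex_intro _ g (Hf g))).
by move=> m'; apply: QP; apply: HQ.
Qed.

Lemma AB Q : qpSpec RG MG Q -> forall r, Gr RG (colon Q) r <-> colon (GrM RG MG Q) r.
Proof. by move=> HQ r; split; [apply: A_sub_B | apply: B_sub_A]. Qed.

Lemma A_prime Q : qpSpec RG MG Q -> graded_prime_ideal RG (Gr RG (colon Q)).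
Proof.
move=> HQ; have HQ' := HQ; case: HQ' => [[HQg HQp HQqp] HQf].
have HI : ideal (colon Q) by apply: colon_ideal; case: HQg.
have HB : ideal (colon (GrM RG MG Q)) by apply: colon_ideal; apply: GrM_sub.
have Ahom : forall x n, homR RG x -> Gr RG (colon Q) (x ^+ n.+1) -> Gr RG (colon Q) x.
  move=> x n [g Hx] /(Gr_pow HI) [[|k] Hk].
    by exfalso; move: Hk; rewrite expr0; apply: proper1.
  by apply: (Gr_hom HR (g := g) (n := (n.+1 * k.+1)%N)) => //; rewrite exprM.
split; first split; first split.
- by apply/AB => //; case: HB.
- by move=> x y /(AB HQ) Hx /(AB HQ) Hy; apply/AB => //; case: HB => _ D _; apply: D.
- by move=> t x /(AB HQ) Hx; apply/AB => //; case: HB => _ _ Z; apply: Z.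
- move=> r [s [f [Hu Hf Er Hp]]]; exists [seq f g | g <- s]; split; last by rewrite big_map.
  move=> x /mapP [g Hg ->]; split; first by exists g.
  have [n [Hn HQn]] := Hp g Hg; exact: (Gr_hom HR (Hf g) HQn Hn).
- move=> H; have [n Hn] := Gr_pow HI (H 1); move: Hn; rewrite expr1n; exact: proper1.
move=> a b Ha Hb Hab.
have [n Hn] := Gr_pow HI Hab.
have Hn1 : colon Q ((a ^+ n.+1) * (b ^+ n.+1)).
  by rewrite -exprMn exprS; case: HI => _ _ Z; apply: Z.
case: (classic (Gr RG (colon Q) (a ^+ n.+1))) => Ha'.
  by left; apply: (Ahom a n).
right; apply: (Ahom b n) => //; apply/AB => //.
apply: (sumhom HM (GrM_sub Q)) => m Hm.
case: (HQqp (a ^+ n.+1) (b ^+ n.+1 *: m) (homRX HR n Ha) (homMZ HM (homRX HR n Hb) Hm)) => //.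
by rewrite scalerA; apply: Hn1.
Qed.

End Main.

Unset Implicit Arguments.
Set Strict Implicit.

Theorem theorem4p3 (G : groupType) (R : comPzRingType) (M : lmodType R)
  (RG : G -> R -> Prop) (MG : G -> M -> Prop)
  (HR : graded_ring RG) (HM : graded_module RG MG)
  (Rbar : comPzRingType) (pi : {rmorphism R -> Rbar})
  (pi_surj : forall y : Rbar, exists r : R, pi r = y)
  (pi_ker : forall r : R, pi r = 0 <-> Ann M r) :
  [<-> qz_T0 RG MG;
       forall Q P, qpSpec RG MG Q -> qpSpec RG MG P ->
         qpV RG MG Q = qpV RG MG P -> Q = P;
       forall p, graded_prime_ideal RG p ->
         forall Q1 Q2, qpSpec_p RG MG p Q1 -> qpSpec_p RG MG p Q2 -> Q1 = Q2;
       forall Q P, qpSpec RG MG Q -> qpSpec RG MG P ->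
         phi RG MG pi Q = phi RG MG pi P -> Q = P].
Proof.
have eqV : forall Q P, qpSpec RG MG Q -> qpSpec RG MG P ->
    qpV RG MG Q = qpV RG MG P -> forall r, Gr RG (colon Q) r -> Gr RG (colon P) r.
  move=> Q P HQ HP EV r.
  have : qpV RG MG P P by split.
  by rewrite -EV => [[_ H]]; apply: H.
have Veq : forall Q P, (forall r, Gr RG (colon Q) r <-> Gr RG (colon P) r) ->
    qpV RG MG Q = qpV RG MG P.
  move=> Q P E; apply: functional_extensionality => X; apply: propositional_extensionality.
  rewrite /qpV; split=> [[HX H]|[HX H]]; split => // r Hr; apply: H; by apply/E.
have two_one : (forall Q P, qpSpec RG MG Q -> qpSpec RG MG P ->
         qpV RG MG Q = qpV RG MG P -> Q = P) -> qz_T0 RG MG.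
  move=> H2 Q P HQ HP Hne.
  case: (classic (subset_of (Gr RG (colon Q)) (Gr RG (colon P)))) => HQP.
    case: (classic (subset_of (Gr RG (colon P)) (Gr RG (colon Q)))) => HPQ.
      by exfalso; apply: Hne; apply: H2 => //; apply: Veq => r; split; [apply: HQP|apply: HPQ].
    exists (fun X => qpSpec RG MG X /\ ~ qpV RG MG P X); split.
      by exists P; split => //; case: HP => [[]].
    left; split; first by split => // [[_ H]]; apply: HPQ.
    by move=> [_ H]; apply: H; split.
  exists (fun X => qpSpec RG MG X /\ ~ qpV RG MG Q X); split.
    by exists Q; split => //; case: HQ => [[]].
  right; split; first by split => // [[_ H]]; apply: HQP.
  by move=> [_ H]; apply: H; split.
have phiB : forall Q P, phi RG MG pi Q = phi RG MG pi P ->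
    forall r, colon (GrM RG MG Q) r -> colon (GrM RG MG P) r.
  move=> Q P E r Hr.
  have : phi RG MG pi Q (pi r) by exists r.
  rewrite E => [[r' [Hr' Er']]].
  have HB : ideal (colon (GrM RG MG P)) by apply: colon_ideal; apply: GrM_sub.
  have Hd : colon (GrM RG MG P) (r - r').
    have /pi_ker Hk : pi (r - r') = 0 by rewrite rmorphB Er' subrr.
    move=> m; rewrite (Hk m); by case: (GrM_sub RG MG P).
  rewrite -(subrK r' r); case: HB => _ D _; exact: D.
tfae.
- move=> H1 Q P HQ HP EV; apply: NNPP => Hne.
  have [U [[K [HK EU]] Hsep]] := H1 Q P HQ HP Hne; subst U.
  case: Hsep => [[[_ nKQ] nKP]|[[_ nKP] nKQ]].
    apply: nKQ; split => //; apply: NNPP => H; apply: nKP; split => // [[_ HKP]].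
    by apply: H => r /HKP /(eqV P Q HP HQ (esym EV)).
  apply: nKP; split => //; apply: NNPP => H; apply: nKQ; split => // [[_ HKQ]].
  by apply: H => r /HKQ /(eqV Q P HQ HP EV).
- move=> H2 p Hp Q1 Q2 [HQ1 E1] [HQ2 E2]; apply: H2 => //.
  by rewrite /qpV E1 E2.
- move=> H3 Q P HQ HP Ephi.
  have EA : Gr RG (colon Q) = Gr RG (colon P).
    apply: functional_extensionality => r; apply: propositional_extensionality.
    split=> Hr; apply/(AB HR HM) => //; [apply: (phiB Q P Ephi) | apply: (phiB P Q (esym Ephi))];
      by apply/(AB HR HM).
  apply: (H3 (Gr RG (colon Q)) (A_prime HR HM HQ)); split => //.
- move=> H4; apply: two_one => Q P HQ HP EV; apply: H4 => //.
  apply: functional_extensionality => y; apply: propositional_extensionality.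
  rewrite /phi; split=> [[r [Hr Er]]|[r [Hr Er]]]; exists r; split => //.
    by apply/(AB HR HM) => //; apply: (eqV Q P HQ HP EV); apply/(AB HR HM).
  by apply/(AB HR HM) => //; apply: (eqV P Q HP HQ (esym EV)); apply/(AB HR HM).
Qed.
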